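(* Let $H$ be a $k$-linear semi-Hopf category and $A$ an $H$-Galois category extension of $B=A^{{\rm co}H}$, and for $x,y\in X$ let $\gamma_{xy}:H_{xy}\to A_{yx}\otimes_{B_x}A_{xy}$, $\gamma_{xy}(h)=({\rm can}^y_{xy})^{-1}(1_y\otimes h)=\sum_i l_i(h)\otimes_{B_x}r_i(h)$. Then for all $x,y,z\in X$, $h\in H_{xy}$, $h'\in H_{yz}$: (a) $\gamma_{xy}(h)\in(A_{yx}\otimes_{B_x}A_{xy})^{B_y}=\{u\mid bu=ub\ \forall b\in B_y\}$; (b) $\gamma_{xz}(hh')=\sum_{i,j}l_i(h')l_j(h)\otimes_{B_x}r_j(h)r_i(h')$ (the right-hand side being the image of $\gamma_{yz}(h')\otimes\gamma_{xy}(h)$ under the map $(a'\otimes_{B_y}b')\otimes(a\otimes_{B_x}b)\mapsto a'a\otimes_{B_x}bb'$, well defined by (a)); (c) $\gamma_{xy}(h_{(1)})\otimes h_{(2)}=\sum_i l_i(h)\otimes_{B_x}r_i(h)_{[0]}\otimes r_i(h)_{[1]}$; (d) $\sum_i l_i(h)r_i(h)=\varepsilon_{xy}(h)1_y$; (e) if moreover $H$ is a Hopf category with antipode $S$, then $\gamma_{xy}(h_{(2)})\otimes S_{xy}(h_{(1)})=\sum_i l_i(h)_{[0]}\otimes_{B_x}r_i(h)\otimes l_i(h)_{[1]}$.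
   Context: Let $k$ be a commutative ring; unadorned $\otimes$ is over $k$. A $k$-linear category $A$ with class of objects $X$ consists of $k$-modules $A_{xy}$, associative compositions $A_{xy}\otimes A_{yz}\to A_{xz}$, $a\otimes b\mapsto ab$, and units $1_x\in A_{xx}$. A $k$-linear semi-Hopf category $H$ (objects $X$) is a $k$-linear category in which each $H_{xy}$ is a $k$-coalgebra with $\Delta_{xy}(h)=h_{(1)}\otimes h_{(2)}$ and counit $\varepsilon_{xy}$, such that $\Delta_{xz}(hh')=h_{(1)}h'_{(1)}\otimes h_{(2)}h'_{(2)}$, $\Delta_{xx}(1_x)=1_x\otimes1_x$, $\varepsilon_{xz}(hh')=\varepsilon_{xy}(h)\varepsilon_{yz}(h')$, $\varepsilon_{xx}(1_x)=1$. It is a Hopf category if there are $k$-linear maps $S_{xy}:H_{xy}\to H_{yx}$ with $h_{(1)}S_{xy}(h_{(2)})=\varepsilon_{xy}(h)1_x$ and $S_{xy}(h_{(1)})h_{(2)}=\varepsilon_{xy}(h)1_y$. A right $H$-comodule category is a $k$-linear category $A$ with objects $X$ such that each $A_{xy}$ is a right $H_{xy}$-comodule, $\rho_{xy}(a)=a_{[0]}\otimes a_{[1]}$, with $\rho_{xz}(ab)=a_{[0]}b_{[0]}\otimes a_{[1]}b_{[1]}$ and $\rho_{xx}(1_x)=1_x\otimes1_x$. Its coinvariants are $B_x=\{a\in A_{xx}\mid\rho_{xx}(a)=a\otimes1_x\}$. The canonical maps are ${\rm can}^z_{xy}:A_{zx}\otimes_{B_x}A_{xy}\to A_{zy}\otimes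 H_{xy}$, $a\otimes_{B_x}a'\mapsto aa'_{[0]}\otimes a'_{[1]}$; $A$ is an $H$-Galois category extension of $B$ if all ${\rm can}^z_{xy}$ are bijective. *)

(* Defs.v *)
From HB Require Import structures.
From mathcomp Require Import all_boot all_order all_algebra.
Set Implicit Arguments. Unset Strict Implicit. Unset Printing Implicit Defensive.
Import GRing.Theory.
Local Open Scope ring_scope.

(* Tensor products.  An element of a (relative) tensor product              *)
(*   M (x)_S N   (S acting on M on the right via ra, on N on the left via la,*)
(*                only the elements of S satisfying P being balanced)        *)
(* is represented by a formal sum  sum_i m_i (x) n_i, i.e. a list of pairs.  *)
(* Two formal sums are equal in the tensor product iff they have the same    *)
(* image under every biadditive P-balanced map into an abelian group         *)
(* (universal property of the tensor product).                               *)

Definition tens2 (M N : zmodType) (S : Type) (P : S -> Prop)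
  (ra : M -> S -> M) (la : S -> N -> N) (s t : seq (M * N)) : Prop :=
  forall (V : zmodType) (f : M -> N -> V),
    (forall m m' n, f (m + m') n = f m n + f m' n) ->
    (forall m n n', f m (n + n') = f m n + f m n') ->
    (forall b m n, P b -> f (ra m b) n = f m (la b n)) ->
    \sum_(p <- s) f p.1 p.2 = \sum_(p <- t) f p.1 p.2.

Definition tens3 (M N Q : zmodType)
  (S1 : Type) (P1 : S1 -> Prop) (ra1 : M -> S1 -> M) (la1 : S1 -> N -> N)
  (S2 : Type) (P2 : S2 -> Prop) (ra2 : N -> S2 -> N) (la2 : S2 -> Q -> Q)
  (s t : seq (M * N * Q)) : Prop :=
  forall (V : zmodType) (f : M -> N -> Q -> V),
    (forall m m' n q, f (m + m') n q = f m n q + f m' n q) ->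
    (forall m n n' q, f m (n + n') q = f m n q + f m n' q) ->
    (forall m n q q', f m n (q + q') = f m n q + f m n q') ->
    (forall b m n q, P1 b -> f (ra1 m b) n q = f m (la1 b n) q) ->
    (forall b m n q, P2 b -> f m (ra2 n b) q = f m n (la2 b q)) ->
    \sum_(p <- s) f p.1.1 p.1.2 p.2 = \sum_(p <- t) f p.1.1 p.1.2 p.2.

Definition tk2 (k : comPzRingType) (M N : lmodType k) :=
  @tens2 M N k (fun _ => True) (fun m r => r *: m) (fun r n => r *: n).

Definition tk3 (k : comPzRingType) (M N Q : lmodType k) :=
  @tens3 M N Q k (fun _ => True) (fun m r => r *: m) (fun r n => r *: n)
                k (fun _ => True) (fun m r => r *: m) (fun r n => r *: n).

Definition is_kcat (k : comPzRingType) (X : Type) (C : X -> X -> lmodType k)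
  (comp : forall x y z, C x y -> C y z -> C x z) (one : forall x, C x x) : Prop :=
  [/\ (forall x y z (r : k) (a a' : C x y) (b : C y z),
         comp _ _ _ (r *: a + a') b = r *: comp _ _ _ a b + comp _ _ _ a' b),
      (forall x y z (r : k) (a : C x y) (b b' : C y z),
         comp _ _ _ a (r *: b + b') = r *: comp _ _ _ a b + comp _ _ _ a b'),
      (forall x y z w (a : C x y) (b : C y z) (c : C z w),
         comp _ _ _ (comp _ _ _ a b) c = comp _ _ _ a (comp _ _ _ b c)),
      (forall x y (a : C x y), comp _ _ _ (one x) a = a) &
      (forall x y (a : C x y), comp _ _ _ a (one y) = a)].

(* Delta_xy(h) in H_xy (x) H_xy.                                            *)
Definition is_semiHopf (k : comPzRingType) (X : Type) (H : X -> X -> lmodType k)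
  (compH : forall x y z, H x y -> H y z -> H x z) (oneH : forall x, H x x)
  (delta : forall x y, H x y -> seq (H x y * H x y))
  (eps : forall x y, H x y -> k) : Prop :=
  [/\ is_kcat compH oneH,
      (forall x y, [/\
         (forall (r : k) (h h' : H x y),
            tk2 (delta x y (r *: h + h'))
                ([seq (r *: p.1, p.2) | p <- delta x y h] ++ delta x y h')),
         (forall (r : k) (h h' : H x y),
            eps x y (r *: h + h') = r * eps x y h + eps x y h'),
         (forall h : H x y,
            tk3 [seq (q.1, q.2, p.2) | p <- delta x y h, q <- delta x y p.1]
                [seq (p.1, q.1, q.2) | p <- delta x y h, q <- delta x y p.2]),
         (forall h : H x y, \sum_(p <- delta x y h) eps x y p.1 *: p.2 = h) &
         (forall h : H x y, \sum_(p <- delta x y h) eps x y p.2 *: p.1 = h)]),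
      (forall x y z (h : H x y) (h' : H y z),
         tk2 (delta x z (compH _ _ _ h h'))
             [seq (compH _ _ _ p.1 q.1, compH _ _ _ p.2 q.2)
               | p <- delta x y h, q <- delta y z h']),
      (forall x, tk2 (delta x x (oneH x)) [:: (oneH x, oneH x)]) &
      ((forall x y z (h : H x y) (h' : H y z),
         eps x z (compH _ _ _ h h') = eps x y h * eps y z h') /\
       (forall x, eps x x (oneH x) = 1))].

Definition is_antipode (k : comPzRingType) (X : Type) (H : X -> X -> lmodType k)
  (compH : forall x y z, H x y -> H y z -> H x z) (oneH : forall x, H x x)
  (delta : forall x y, H x y -> seq (H x y * H x y))
  (eps : forall x y, H x y -> k) (S : forall x y, H x y -> H y x) : Prop :=
  forall x y, [/\
    (forall (r : k) (h h' : H x y), S x y (r *: h + h') = r *: S x y h + S x y h'),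
    (forall h : H x y,
       \sum_(p <- delta x y h) compH _ _ _ p.1 (S x y p.2) = eps x y h *: oneH x) &
    (forall h : H x y,
       \sum_(p <- delta x y h) compH _ _ _ (S x y p.1) p.2 = eps x y h *: oneH y)].

(* right H-comodule categories; rho x y a is a representative of rho_xy(a)  *)
Definition is_comodule_cat (k : comPzRingType) (X : Type) (H : X -> X -> lmodType k)
  (compH : forall x y z, H x y -> H y z -> H x z) (oneH : forall x, H x x)
  (delta : forall x y, H x y -> seq (H x y * H x y))
  (eps : forall x y, H x y -> k)
  (A : X -> X -> lmodType k)
  (compA : forall x y z, A x y -> A y z -> A x z) (oneA : forall x, A x x)
  (rho : forall x y, A x y -> seq (A x y * H x y)) : Prop :=
  [/\ is_kcat compA oneA,
      (forall x y, [/\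
         (forall (r : k) (a a' : A x y),
            tk2 (rho x y (r *: a + a'))
                ([seq (r *: p.1, p.2) | p <- rho x y a] ++ rho x y a')),
         (forall a : A x y,
            tk3 [seq (q.1, q.2, p.2) | p <- rho x y a, q <- rho x y p.1]
                [seq (p.1, q.1, q.2) | p <- rho x y a, q <- delta x y p.2]) &
         (forall a : A x y, \sum_(p <- rho x y a) eps x y p.2 *: p.1 = a)]),
      (forall x y z (a : A x y) (b : A y z),
         tk2 (rho x z (compA _ _ _ a b))
             [seq (compA _ _ _ p.1 q.1, compH _ _ _ p.2 q.2)
               | p <- rho x y a, q <- rho y z b]) &
      (forall x, tk2 (rho x x (oneA x)) [:: (oneA x, oneH x)])].

Definition coinv (k : comPzRingType) (X : Type) (H : X -> X -> lmodType k)
  (oneH : forall x, H x x) (A : X -> X -> lmodType k)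
  (rho : forall x y, A x y -> seq (A x y * H x y)) (x : X) (a : A x x) : Prop :=
  tk2 (rho x x a) [:: (a, oneH x)].

(* equality in  A_zx (x)_{B_x} A_xy *)
Definition tB (k : comPzRingType) (X : Type) (H : X -> X -> lmodType k)
  (oneH : forall x, H x x) (A : X -> X -> lmodType k)
  (compA : forall x y z, A x y -> A y z -> A x z)
  (rho : forall x y, A x y -> seq (A x y * H x y)) (z x y : X) :=
  @tens2 (A z x) (A x y) (A x x) (@coinv k X H oneH A rho x)
         (compA z x x) (compA x x y).

Arguments tB {k X H} oneH {A} compA rho z x y.

Definition tB3 (k : comPzRingType) (X : Type) (H : X -> X -> lmodType k)
  (oneH : forall x, H x x) (A : X -> X -> lmodType k)
  (compA : forall x y z, A x y -> A y z -> A x z)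
  (rho : forall x y, A x y -> seq (A x y * H x y)) (z x y : X) (Q : lmodType k) :=
  @tens3 (A z x) (A x y) Q (A x x) (@coinv k X H oneH A rho x)
         (compA z x x) (compA x x y)
         k (fun _ => True) (fun m r => r *: m) (fun r n => r *: n).

Arguments tB3 {k X H} oneH {A} compA rho z x y Q.

Definition can (k : comPzRingType) (X : Type) (H : X -> X -> lmodType k)
  (A : X -> X -> lmodType k)
  (compA : forall x y z, A x y -> A y z -> A x z)
  (rho : forall x y, A x y -> seq (A x y * H x y)) (z x y : X)
  (s : seq (A z x * A x y)) : seq (A z y * H x y) :=
  [seq (compA _ _ _ p.1 q.1, q.2) | p <- s, q <- rho x y p.2].

Definition is_galois (k : comPzRingType) (X : Type) (H : X -> X -> lmodType k)
  (oneH : forall x, H x x) (A : X -> X -> lmodType k)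
  (compA : forall x y z, A x y -> A y z -> A x z)
  (rho : forall x y, A x y -> seq (A x y * H x y)) : Prop :=
  forall z x y,
    (forall s t : seq (A z x * A x y),
        tk2 (can compA rho s) (can compA rho t) ->
        tB oneH compA rho z x y s t) /\
    (forall w : seq (A z y * H x y), exists s : seq (A z x * A x y),
        tk2 (can compA rho s) w).

Definition is_gamma (k : comPzRingType) (X : Type) (H : X -> X -> lmodType k)
  (A : X -> X -> lmodType k)
  (compA : forall x y z, A x y -> A y z -> A x z) (oneA : forall x, A x x)
  (rho : forall x y, A x y -> seq (A x y * H x y)) (x y : X)
  (h : H x y) (s : seq (A y x * A x y)) : Prop :=
  tk2 (can compA rho s) [:: (oneA y, h)].

(* Main.v *)
Require Import Defs.
From HB Require Import structures.
From mathcomp Require Import all_boot all_order all_algebra.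
From Stdlib Require Import IndefiniteDescription.
Import GRing.Theory.
Local Open Scope ring_scope.

Module Aux.
Set Implicit Arguments. Unset Strict Implicit. Unset Printing Implicit Defensive.
Lemma addf0l (M N V : zmodType) (f : M -> N -> V) :
  (forall m m' n, f (m+m') n = f m n + f m' n) -> forall n, f 0 n = 0.
Proof. by move=> Hf n; apply: (@addrI _ (f 0 n)); rewrite -Hf !addr0. Qed.
Lemma addf0r (M N V : zmodType) (f : M -> N -> V) :
  (forall m n n', f m (n+n') = f m n + f m n') -> forall m, f m 0 = 0.
Proof. by move=> Hf m; apply: (@addrI _ (f m 0)); rewrite -Hf !addr0. Qed.
Lemma addf_suml (M N V : zmodType) (f : M -> N -> V) I (s : seq I) (F : I -> M) n :
  (forall m m' n, f (m+m') n = f m n + f m' n) ->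
  f (\sum_(i <- s) F i) n = \sum_(i <- s) f (F i) n.
Proof.
move=> Hf; elim: s => [|a s IH]; first by rewrite !big_nil (addf0l Hf).
by rewrite !big_cons Hf IH.
Qed.
Lemma addf_sumr (M N V : zmodType) (f : M -> N -> V) I (s : seq I) (F : I -> N) m :
  (forall m n n', f m (n+n') = f m n + f m n') ->
  f m (\sum_(i <- s) F i) = \sum_(i <- s) f m (F i).
Proof.
move=> Hf; elim: s => [|a s IH]; first by rewrite !big_nil (addf0r Hf).
by rewrite !big_cons Hf IH.
Qed.

Section Gen.
Variable k : comPzRingType.

Definition kbal (M N : lmodType k) (V : zmodType) (f : M -> N -> V) :=
 [/\ forall m m' n, f (m + m') n = f m n + f m' n,
     forall m n n', f m (n + n') = f m n + f m n' &
     forall r m n, f (r *: m) n = f m (r *: n)].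

Lemma tk2P (M N : lmodType k) (s t : seq (M*N)) : tk2 s t ->
  forall (V : zmodType) (f : M -> N -> V), kbal f ->
  \sum_(p<-s) f p.1 p.2 = \sum_(p<-t) f p.1 p.2.
Proof. by move=> H V f [h1 h2 h3]; apply: H. Qed.

Definition kbal3 (M N Q : lmodType k) (V : zmodType) (f : M -> N -> Q -> V) :=
 [/\ forall m m' n q, f (m + m') n q = f m n q + f m' n q,
     forall m n n' q, f m (n + n') q = f m n q + f m n' q,
     forall m n q q', f m n (q + q') = f m n q + f m n q',
     forall r m n q, f (r *: m) n q = f m (r *: n) q &
     forall r m n q, f m (r *: n) q = f m n (r *: q)].

Lemma tk3P (M N Q : lmodType k) (s t : seq (M*N*Q)) : tk3 s t ->
  forall (V : zmodType) (f : M -> N -> Q -> V), kbal3 f ->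
  \sum_(p<-s) f p.1.1 p.1.2 p.2 = \sum_(p<-t) f p.1.1 p.1.2 p.2.
Proof. move=> H V f [h1 h2 h3 h4 h5]; apply: H; by [ | move=> *; apply: h4 | move=> *; apply: h5]. Qed.

Lemma tk2_refl (M N : lmodType k) (s : seq (M*N)) : tk2 s s.
Proof. by []. Qed.

Section Lin.
Variables (M P Q : lmodType k) (d : M -> seq (P * Q)).
Hypothesis dlin : forall (r : k) (m m' : M),
  tk2 (d (r *: m + m')) ([seq (r *: p.1, p.2) | p <- d m] ++ d m').

Lemma lin_add (V : zmodType) (f : P -> Q -> V) : kbal f -> forall m m',
  \sum_(p <- d (m + m')) f p.1 p.2 =
  \sum_(p <- d m) f p.1 p.2 + \sum_(p <- d m') f p.1 p.2.
Proof.
move=> kf m m'; have := tk2P (dlin 1 m m') kf.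
by rewrite scale1r big_cat big_map /= => ->; under eq_bigr do rewrite scale1r.
Qed.

Lemma lin_0 (V : zmodType) (f : P -> Q -> V) : kbal f -> \sum_(p <- d 0) f p.1 p.2 = 0.
Proof.
move=> kf; apply: (@addrI _ (\sum_(p <- d 0) f p.1 p.2)).
by rewrite -lin_add // !addr0.
Qed.

Lemma lin_scale (V : zmodType) (f : P -> Q -> V) : kbal f -> forall r m,
  \sum_(p <- d (r *: m)) f p.1 p.2 = \sum_(p <- d m) f (r *: p.1) p.2.
Proof.
move=> kf r m; have := tk2P (dlin r m 0) kf.
by rewrite addr0 big_cat big_map /= lin_0 // addr0.
Qed.
End Lin.

Section Cat.
Variables (X : Type) (C : X -> X -> lmodType k)
  (comp : forall x y z, C x y -> C y z -> C x z) (one : forall x, C x x).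
Hypothesis Hc : is_kcat comp one.

Lemma compDl x y z (a a' : C x y) (b : C y z) :
  comp (a + a') b = comp a b + comp a' b.
Proof. case: Hc => h _ _ _ _. have := h x y z 1 a a' b. rewrite !scale1r. done. Qed.
Lemma compDr x y z (a : C x y) (b b' : C y z) :
  comp a (b + b') = comp a b + comp a b'.
Proof. case: Hc => _ h _ _ _. have := h x y z 1 a b b'. rewrite !scale1r. done. Qed.
Lemma comp0l x y z (b : C y z) : comp (0 : C x y) b = 0.
Proof. by apply: (@addrI _ (comp (0 : C x y) b)); rewrite -compDl !addr0. Qed.
Lemma comp0r x y z (a : C x y) : comp a (0 : C y z) = 0.
Proof. by apply: (@addrI _ (comp a (0 : C y z))); rewrite -compDr !addr0. Qed.
Lemma compZl x y z r (a : C x y) (b : C y z) : comp (r *: a) b = r *: comp a b.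
Proof. by case: Hc => h _ _ _ _; rewrite -[r *: a]addr0 h comp0l addr0. Qed.
Lemma compZr x y z r (a : C x y) (b : C y z) : comp a (r *: b) = r *: comp a b.
Proof. by case: Hc => _ h _ _ _; rewrite -[r *: b]addr0 h comp0r addr0. Qed.
Lemma compAss x y z w (a : C x y) (b : C y z) (c : C z w) :
  comp (comp a b) c = comp a (comp b c).
Proof. by case: Hc. Qed.
Lemma comp1l x y (a : C x y) : comp (one x) a = a. Proof. by case: Hc. Qed.
Lemma comp1r x y (a : C x y) : comp a (one y) = a. Proof. by case: Hc. Qed.
Lemma comp_suml x y z I (s : seq I) (F : I -> C x y) (b : C y z) :
  comp (\sum_(i <- s) F i) b = \sum_(i <- s) comp (F i) b.
Proof. by elim: s => [|i s IH]; rewrite ?big_nil ?comp0l // !big_cons compDl IH. Qed.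
Lemma comp_sumr x y z I (s : seq I) (F : I -> C y z) (a : C x y) :
  comp a (\sum_(i <- s) F i) = \sum_(i <- s) comp a (F i).
Proof. by elim: s => [|i s IH]; rewrite ?big_nil ?comp0r // !big_cons compDr IH. Qed.
End Cat.
End Gen.

Lemma sum_swap3 (V : zmodType) (I J K : Type) (r1 : seq I) (r2 : I -> seq J)
  (r3 : seq K) (F : I -> J -> K -> V) :
  \sum_(i <- r1) \sum_(j <- r2 i) \sum_(l <- r3) F i j l =
  \sum_(l <- r3) \sum_(i <- r1) \sum_(j <- r2 i) F i j l.
Proof.
transitivity (\sum_(i <- r1) \sum_(l <- r3) \sum_(j <- r2 i) F i j l).
  by apply: eq_bigr => i _; rewrite exchange_big.
by rewrite exchange_big.
Qed.

Lemma tk2I (k : comPzRingType) (M N : lmodType k) (s t : seq (M*N)) :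
  (forall (V : zmodType) (f : M -> N -> V), kbal f ->
    \sum_(p<-s) f p.1 p.2 = \sum_(p<-t) f p.1 p.2) -> tk2 s t.
Proof. by move=> E V f f1 f2 f3; apply: E; split=> // r m n; apply: f3. Qed.

Lemma sum_swap2 (V : zmodType) (I J : Type) (r1 : seq I) (r2 : seq J) (F : I -> J -> V) :
  \sum_(i <- r1) \sum_(j <- r2) F i j = \sum_(j <- r2) \sum_(i <- r1) F i j.
Proof. by rewrite exchange_big. Qed.

Unset Implicit Arguments.
Section Main.
Variables (k : comPzRingType) (X : Type)
  (H : X -> X -> lmodType k)
  (compH : forall x y z, H x y -> H y z -> H x z) (oneH : forall x, H x x)
  (delta : forall x y, H x y -> seq (H x y * H x y))
  (eps : forall x y, H x y -> k)
  (A : X -> X -> lmodType k)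
  (compA : forall x y z, A x y -> A y z -> A x z) (oneA : forall x, A x x)
  (rho : forall x y, A x y -> seq (A x y * H x y)).
Set Implicit Arguments. Unset Strict Implicit.
Hypothesis HS : is_semiHopf compH oneH delta eps.
Hypothesis HC : is_comodule_cat compH oneH delta eps compA oneA rho.
Hypothesis HG : is_galois oneH compA rho.

Lemma HcatH : is_kcat compH oneH. Proof. by case: HS. Qed.
Lemma HcatA : is_kcat compA oneA. Proof. by case: HC. Qed.
Lemma dlin x y r (h h' : H x y) :
  tk2 (delta x y (r *: h + h')) ([seq (r *: p.1, p.2) | p <- delta x y h] ++ delta x y h').
Proof. by case: HS => _ /(_ x y) []. Qed.
Lemma eps_lin x y r (h h' : H x y) : eps x y (r *: h + h') = r * eps x y h + eps x y h'.
Proof. by case: HS => _ /(_ x y) []. Qed.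
Lemma dcoass x y (h : H x y) :
  tk3 [seq (q.1, q.2, p.2) | p <- delta x y h, q <- delta x y p.1]
      [seq (p.1, q.1, q.2) | p <- delta x y h, q <- delta x y p.2].
Proof. by case: HS => _ /(_ x y) []. Qed.
Lemma dcounit x y (h : H x y) : \sum_(p <- delta x y h) eps x y p.1 *: p.2 = h.
Proof. by case: HS => _ /(_ x y) []. Qed.
Lemma rlin x y r (a a' : A x y) :
  tk2 (rho x y (r *: a + a')) ([seq (r *: p.1, p.2) | p <- rho x y a] ++ rho x y a').
Proof. by case: HC => _ /(_ x y) []. Qed.
Lemma rcoass x y (a : A x y) :
  tk3 [seq (q.1, q.2, p.2) | p <- rho x y a, q <- rho x y p.1]
      [seq (p.1, q.1, q.2) | p <- rho x y a, q <- delta x y p.2].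
Proof. by case: HC => _ /(_ x y) []. Qed.
Lemma rcounit x y (a : A x y) : \sum_(p <- rho x y a) eps x y p.2 *: p.1 = a.
Proof. by case: HC => _ /(_ x y) []. Qed.
Lemma rmul x y z (a : A x y) (b : A y z) :
  tk2 (rho x z (compA _ _ _ a b))
      [seq (compA _ _ _ p.1 q.1, compH _ _ _ p.2 q.2) | p <- rho x y a, q <- rho y z b].
Proof. by case: HC. Qed.
Lemma rone x : tk2 (rho x x (oneA x)) [:: (oneA x, oneH x)].
Proof. by case: HC. Qed.

Lemma eps0 x y : eps x y 0 = 0.
Proof. by apply: (@addrI _ (eps x y 0)); have := eps_lin 1 (0 : H x y) 0; rewrite scale1r mul1r !addr0 => <-. Qed.
Lemma epsD x y (h h' : H x y) : eps x y (h + h') = eps x y h + eps x y h'.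
Proof. by rewrite -{1}[h]scale1r eps_lin mul1r. Qed.
Lemma epsZ x y r (h : H x y) : eps x y (r *: h) = r * eps x y h.
Proof. by rewrite -[r *: h]addr0 eps_lin eps0 addr0. Qed.

Lemma canE z x y (s : seq (A z x * A x y)) (V : zmodType) (F : A z y * H x y -> V) :
  \sum_(p <- can compA rho s) F p =
  \sum_(p <- s) \sum_(q <- rho x y p.2) F (compA _ _ _ p.1 q.1, q.2).
Proof. by rewrite big_allpairs_dep. Qed.

Definition bbal z x y (V : zmodType) (f : A z x -> A x y -> V) :=
  [/\ forall m m' n, f (m + m') n = f m n + f m' n,
      forall m n n', f m (n + n') = f m n + f m n' &
      forall b m n, coinv oneH rho b -> f (compA _ _ _ m b) n = f m (compA _ _ _ b n)].

Lemma ginj z x y (s t : seq (A z x * A x y)) :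
  (forall (V : zmodType) (f : A z y -> H x y -> V), kbal f ->
     \sum_(p <- can compA rho s) f p.1 p.2 = \sum_(p <- can compA rho t) f p.1 p.2) ->
  forall (V : zmodType) (f : A z x -> A x y -> V), bbal f ->
     \sum_(p <- s) f p.1 p.2 = \sum_(p <- t) f p.1 p.2.
Proof.
move=> E V f [f1 f2 f3]; have [inj _] := HG z x y.
by apply: inj => // V' g g1 g2 g3; apply: E; split=> // r m n; apply: g3.
Qed.

Lemma part_d x y (h : H x y) (s : seq (A y x * A x y)) :
  is_gamma compA oneA rho h s ->
  \sum_(p <- s) compA _ _ _ p.1 p.2 = eps x y h *: oneA y.
Proof.
move=> Hs.
have := tk2P Hs (f := fun (a : A y y) (hh : H x y) => eps x y hh *: a).
rewrite canE big_seq1 /= => <-; last first.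
  split=> [m m' n|m n n'|r m n]; rewrite ?scalerDr ?epsD ?scalerDl //.
  by rewrite epsZ scalerA mulrC.
apply: eq_bigr => p _; rewrite -{1}(rcounit p.2) (comp_sumr HcatA).
by apply: eq_bigr => q _; rewrite (compZr HcatA).
Qed.


Lemma part_a x y (h : H x y) (s : seq (A y x * A x y)) :
  is_gamma compA oneA rho h s ->
  forall b : A y y, coinv oneH rho b ->
    tB oneH compA rho y x y
       [seq (compA _ _ _ b p.1, p.2) | p <- s]
       [seq (p.1, compA _ _ _ p.2 b) | p <- s].
Proof.
move=> Hs b Hb; have [inj _] := HG y x y; apply: inj => V f f1 f2 f3.
have f3' : forall r m n, f (r *: m) n = f m (r *: n) by move=> r m n; apply: f3.
rewrite !canE !big_map /=.
transitivity (f b h).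
  have E1 := tk2P Hs (f := fun a hh => f (compA _ _ _ b a) hh).
  rewrite canE big_seq1 /= (comp1r HcatA) in E1; rewrite -E1; last first.
    split=> [m m' n|m n n'|r m n]; rewrite ?(compDr HcatA) ?f1 ?f2 //.
    by rewrite (compZr HcatA) f3'.
  by apply: eq_bigr => p _; apply: eq_bigr => q _; rewrite (compAss HcatA).
have E4 := tk2P Hs (f := fun a hh => f (compA _ _ _ a b) hh).
rewrite canE big_seq1 /= (comp1l HcatA) in E4; rewrite -E4; last first.
  split=> [m m' n|m n n'|r m n]; rewrite ?(compDl HcatA) ?f1 ?f2 //.
  by rewrite (compZl HcatA) f3'.
apply: eq_bigr => p _.
have E2 := tk2P (rmul p.2 b) (f := fun a hh => f (compA _ _ _ p.1 a) hh).
rewrite big_allpairs_dep /= in E2; rewrite E2; last first.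
  split=> [m m' n|m n n'|r m n]; rewrite ?(compDr HcatA) ?f1 ?f2 //.
  by rewrite (compZr HcatA) f3'.
apply: eq_bigr => q _.
have E3 := tk2P Hb (f := fun a hh => f (compA _ _ _ p.1 (compA _ _ _ q.1 a)) (compH _ _ _ q.2 hh)).
rewrite big_seq1 /= (comp1r HcatH) in E3; rewrite E3 ?(compAss HcatA) //.
split=> [m m' n|m n n'|r m n]; rewrite ?(compDr HcatA) ?(compDr HcatH) ?f1 ?f2 //.
by rewrite !(compZr HcatA) (compZr HcatH) f3'.
Qed.


Lemma part_b x y z (h : H x y) (h' : H y z)
          (s : seq (A y x * A x y)) (t : seq (A z y * A y z))
          (w : seq (A z x * A x z)) :
     is_gamma compA oneA rho h s ->
     is_gamma compA oneA rho h' t ->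
     is_gamma compA oneA rho (compH _ _ _ h h') w ->
     tB oneH compA rho z x z w
        [seq (compA _ _ _ q.1 p.1, compA _ _ _ p.2 q.2) | q <- t, p <- s].
Proof.
move=> Hs Ht Hw; have [inj _] := HG z x z; apply: inj => V f f1 f2 f3.
have f3' : forall r m n, f (r *: m) n = f m (r *: n) by move=> r m n; apply: f3.
have kf : kbal f by [].
rewrite (tk2P Hw kf) big_seq1 /= canE big_allpairs_dep /=.
have E0 := tk2P Ht (f := fun a hh => f a (compH _ _ _ h hh)).
rewrite canE big_seq1 /= in E0; rewrite -E0; last first.
  split=> [m m' n|m n n'|r m n]; rewrite ?(compDr HcatH) ?f1 ?f2 //.
  by rewrite (compZr HcatH) f3'.
apply: eq_bigr => q _.
transitivity (\sum_(p <- s) \sum_(u <- rho x y p.2) \sum_(v <- rho y z q.2)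
   f (compA _ _ _ (compA _ _ _ q.1 p.1) (compA _ _ _ u.1 v.1)) (compH _ _ _ u.2 v.2)); last first.
  apply: eq_bigr => p _.
  have E2 := tk2P (rmul p.2 q.2) (f := fun a hh => f (compA _ _ _ (compA _ _ _ q.1 p.1) a) hh).
  rewrite big_allpairs_dep /= in E2; rewrite E2 //.
  split=> [m m' n|m n n'|r m n]; rewrite ?(compDr HcatA) ?f1 ?f2 //.
  by rewrite (compZr HcatA) f3'.
symmetry; rewrite sum_swap3; apply: eq_bigr => v _.
have E1 := tk2P Hs (f := fun a hh => f (compA _ _ _ q.1 (compA _ _ _ a v.1)) (compH _ _ _ hh v.2)).
rewrite canE big_seq1 /= (comp1l HcatA) in E1; rewrite -E1; last first.
  split=> [m m' n|m n n'|r m n]; rewrite ?(compDl HcatA) ?(compDr HcatA) ?(compDl HcatH) ?f1 ?f2 //.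
  by rewrite (compZl HcatA) (compZr HcatA) (compZl HcatH) f3'.
by symmetry; apply: eq_bigr => p _; apply: eq_bigr => u _; rewrite !(compAss HcatA).
Qed.


Lemma tB3_inj z x y (Q : lmodType k) (u v : seq (A z x * A x y * Q)) :
  tk3 [seq (compA _ _ _ p.1.1 q.1, q.2, p.2) | p <- u, q <- rho x y p.1.2]
      [seq (compA _ _ _ p.1.1 q.1, q.2, p.2) | p <- v, q <- rho x y p.1.2] ->
  tB3 oneH compA rho z x y Q u v.
Proof.
move=> Huv V f f1 f2 f3 fB fk.
have fk' : forall r m n q, f m (r *: n) q = f m n (r *: q) by move=> *; apply: fk.
have [inj surj] := HG z x y.
pose pre (a : A z y) (h : H x y) :=
  sval (constructive_indefinite_description _ (surj [:: (a, h)])).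
have Hpre : forall a h, tk2 (can compA rho (pre a h)) [:: (a, h)].
  by move=> a h; rewrite /pre; case: constructive_indefinite_description.
pose G (a : A z y) (h : H x y) (q : Q) := \sum_(p <- pre a h) f p.1 p.2 q.
have Gsum : forall (s : seq (A z x * A x y)) (wl : seq (A z y * H x y)) q,
    tk2 (can compA rho s) wl ->
    \sum_(p <- s) f p.1 p.2 q = \sum_(c <- wl) G c.1 c.2 q.
  move=> s wl q Hsw.
  have -> : \sum_(c <- wl) G c.1 c.2 q =
            \sum_(p <- flatten [seq pre c.1 c.2 | c <- wl]) f p.1 p.2 q.
    by rewrite big_flatten big_map.
  have E := @ginj z x y s (flatten [seq pre c.1 c.2 | c <- wl]).
  have := E _ V (fun m n => f m n q); apply.
    move=> V' g kg; rewrite (tk2P Hsw kg) canE big_flatten big_map.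
    apply: eq_bigr => c _; have := tk2P (Hpre c.1 c.2) kg.
    by rewrite canE big_seq1 => <-.
  by split=> [m m' n|m n n'|b m n Hb]; rewrite ?f1 ?f2 ?fB.
have kG : kbal3 G.
  split.
  - move=> m m' n q.
    have := Gsum (pre m n ++ pre m' n) [:: (m + m', n)] q.
    rewrite big_cat big_seq1 => <- //.
    apply: tk2I => V' g kg; have [g1 g2 g3] := kg.
    have E1 := tk2P (Hpre m n) kg; have E2 := tk2P (Hpre m' n) kg.
    rewrite canE in E1; rewrite canE in E2.
    by rewrite canE big_cat E1 E2 !big_seq1 g1.
  - move=> m n n' q.
    have := Gsum (pre m n ++ pre m n') [:: (m, n + n')] q.
    rewrite big_cat big_seq1 => <- //.
    apply: tk2I => V' g kg; have [g1 g2 g3] := kg.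
    have E1 := tk2P (Hpre m n) kg; have E2 := tk2P (Hpre m n') kg.
    rewrite canE in E1; rewrite canE in E2.
    by rewrite canE big_cat E1 E2 !big_seq1 g2.
  - by move=> m n q q'; rewrite /G -big_split; apply: eq_bigr => p _; rewrite f3.
  - move=> r m n q.
    have := Gsum (pre (r *: m) n) [:: (m, r *: n)] q.
    rewrite big_seq1 => <- //.
    apply: tk2I => V' g kg; have [g1 g2 g3] := kg.
    by rewrite (tk2P (Hpre _ _) kg) !big_seq1 /= g3.
  - move=> r m n q.
    have := Gsum [seq (p.1, r *: p.2) | p <- pre m n] [:: (m, r *: n)] q.
    rewrite big_seq1 big_map /= => <-.
      by rewrite /G; apply: eq_bigr => p _; rewrite fk'.
    apply: tk2I => V' g kg; have [g1 g2 g3] := kg.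
    rewrite canE big_map big_seq1 /=.
    have E := tk2P (Hpre m n) (f := fun a hh => g a (r *: hh)).
    rewrite canE big_seq1 /= in E; rewrite -E; last first.
      split=> [a a' hh|a hh hh'|r' a hh]; rewrite ?scalerDr ?g1 ?g2 //.
      by rewrite g3 !scalerA mulrC.
    apply: eq_bigr => p _.
    rewrite (lin_scale (@rlin x y) (f := fun a hh => g (compA _ _ _ p.1 a) hh)) /=.
      by apply: eq_bigr => q' _; rewrite (compZr HcatA) g3.
    split=> [a a' hh|a hh hh'|r' a hh]; rewrite ?(compDr HcatA) ?g1 ?g2 //.
    by rewrite (compZr HcatA) g3.
have Gcan : forall u' : seq (A z x * A x y * Q),
  \sum_(p <- [seq (compA _ _ _ p.1.1 q.1, q.2, p.2) | p <- u', q <- rho x y p.1.2])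
     G p.1.1 p.1.2 p.2 = \sum_(p <- u') f p.1.1 p.1.2 p.2.
  move=> u'; rewrite big_allpairs_dep /=; apply: eq_bigr => p _.
  have := Gsum [:: p.1] (can compA rho [:: p.1]) p.2 (tk2_refl _).
  by rewrite big_seq1 canE big_seq1 /= => ->.
by rewrite -!Gcan; apply: (tk3P Huv).
Qed.


Lemma part_c x y (g : H x y -> seq (A y x * A x y)) :
  (forall h : H x y, is_gamma compA oneA rho h (g h)) ->
  forall (h : H x y),
    tB3 oneH compA rho y x y (H x y)
       [seq (q.1, q.2, p.2) | p <- delta x y h, q <- g p.1]
       [seq (p.1, q.1, q.2) | p <- g h, q <- rho x y p.2].
Proof.
move=> Hg h; apply: tB3_inj => V F F1 F2 F3 F12 F23.
have F12' : forall r m n q, F (r *: m) n q = F m (r *: n) q by move=> *; apply: F12.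
have F23' : forall r m n q, F m (r *: n) q = F m n (r *: q) by move=> *; apply: F23.
rewrite !big_allpairs_dep /=.
transitivity (\sum_(p <- delta x y h) F (oneA y) p.1 p.2).
  apply: eq_bigr => p _.
  have E := tk2P (Hg p.1) (f := fun a hh => F a hh p.2).
  rewrite canE big_seq1 /= in E; rewrite E //.
pose T (a : A y y) (hh : H x y) := \sum_(w <- delta x y hh) F a w.1 w.2.
have kT : kbal T.
  split=> [a a' hh|a hh hh'|r a hh]; rewrite /T.
  - by rewrite -big_split; apply: eq_bigr => w _; rewrite F1.
  - rewrite (lin_add (@dlin x y) (f := fun m n => F a m n)) //.
  - rewrite (lin_scale (@dlin x y) (f := fun m n => F a m n)) /=.
      by apply: eq_bigr => w _; rewrite F12'.
    by split=> *; rewrite ?F2 ?F3 ?F23'.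
have E := tk2P (Hg h) kT.
rewrite canE big_seq1 /= /T in E; rewrite -E; symmetry.
apply: eq_bigr => p _.
have E2 := tk3P (rcoass p.2) (f := fun m n o => F (compA _ _ _ p.1 m) n o).
rewrite !big_allpairs_dep /= in E2; rewrite E2 //.
split=> *; rewrite ?(compDr HcatA) ?F1 ?F2 ?F3 ?F23' //.
by rewrite (compZr HcatA) F12'.
Qed.


Section Antipode.
Unset Implicit Arguments.
Variable S : forall x y, H x y -> H y x.
Set Implicit Arguments.
Hypothesis HA : is_antipode compH oneH delta eps S.

Lemma Slin x y r (h h' : H x y) : S x y (r *: h + h') = r *: S x y h + S x y h'.
Proof. by case: (HA x y). Qed.
Lemma S0 x y : S x y 0 = 0.
Proof. by apply: (@addrI _ (S x y 0)); have := Slin 1 (0 : H x y) 0; rewrite !scale1r !addr0 => <-. Qed.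
Lemma SD x y (h h' : H x y) : S x y (h + h') = S x y h + S x y h'.
Proof. by rewrite -{1}[h]scale1r Slin scale1r. Qed.
Lemma SZ x y r (h : H x y) : S x y (r *: h) = r *: S x y h.
Proof. by rewrite -[r *: h]addr0 Slin S0 addr0. Qed.
Lemma Sant x y (h : H x y) :
  \sum_(p <- delta x y h) compH _ _ _ p.1 (S x y p.2) = eps x y h *: oneH x.
Proof. by case: (HA x y). Qed.

Lemma part_e x y (g : H x y -> seq (A y x * A x y)) :
  (forall h : H x y, is_gamma compA oneA rho h (g h)) ->
  forall (h : H x y),
    tB3 oneH compA rho y x y (H y x)
       [seq (q.1, q.2, S x y p.1) | p <- delta x y h, q <- g p.2]
       [seq (q.1, p.2, q.2) | p <- g h, q <- rho y x p.1].
Proof.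
move=> Hg h; apply: tB3_inj => V F F1 F2 F3 F12 F23.
have F12' : forall r m n q, F (r *: m) n q = F m (r *: n) q by move=> *; apply: F12.
have F23' : forall r m n q, F m (r *: n) q = F m n (r *: q) by move=> *; apply: F23.
rewrite !big_allpairs_dep /=.
transitivity (\sum_(p <- delta x y h) F (oneA y) p.2 (S x y p.1)).
  apply: eq_bigr => p _.
  have E := tk2P (Hg p.2) (f := fun a hh => F a hh (S x y p.1)).
  by rewrite canE big_seq1 /= in E; rewrite E //.
have kU : forall kk : H x y, kbal (fun (c : A y y) (hh : H y y) =>
    \sum_(d <- delta x y kk) F c d.2 (compH _ _ _ hh (S x y d.1))).
  move=> kk; split=> [c c' hh|c hh hh'|r c hh].
  - by rewrite -big_split; apply: eq_bigr => d _; rewrite F1.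
  - by rewrite -big_split; apply: eq_bigr => d _; rewrite (compDl HcatH) F3.
  - by apply: eq_bigr => d _; rewrite F12' F23' (compZl HcatH).
have kD : forall (c : A y y) (hh : H y y), kbal (fun (m n : H x y) =>
    F c n (compH _ _ _ hh (S x y m))).
  move=> c hh; split=> [m m' n|m n n'|r m n].
  - by rewrite SD (compDr HcatH) F3.
  - by rewrite F2.
  - by rewrite SZ (compZr HcatH) F23'.
pose T (c : A y y) (kk : H x y) := \sum_(cr <- rho y y c)
   \sum_(d <- delta x y kk) F cr.1 d.2 (compH _ _ _ cr.2 (S x y d.1)).
have kT : kbal T.
  split=> [c c' kk|c kk kk'|r c kk]; rewrite /T.
  - by rewrite (lin_add (@rlin y y) (kU kk)).
  - rewrite -big_split; apply: eq_bigr => cr _.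
    by rewrite (lin_add (@dlin x y) (kD cr.1 cr.2)).
  - rewrite (lin_scale (@rlin y y) (kU kk)); apply: eq_bigr => cr _.
    rewrite (lin_scale (@dlin x y) (kD cr.1 cr.2)); apply: eq_bigr => d _.
    by rewrite F12' F23' SZ (compZr HcatH).
have T1 : T (oneA y) h = \sum_(p <- delta x y h) F (oneA y) p.2 (S x y p.1).
  rewrite /T (tk2P (@rone y) (kU h)) big_seq1 /=.
  by apply: eq_bigr => d _; rewrite (comp1l HcatH).
have E := tk2P (Hg h) kT.
rewrite canE big_seq1 /= in E; rewrite -T1 -E; apply: eq_bigr => p _.
rewrite /T.
transitivity (\sum_(q <- rho x y p.2) \sum_(e <- rho y x p.1) \sum_(e' <- rho x y q.1)
   \sum_(d <- delta x y q.2) F (compA _ _ _ e.1 e'.1) d.2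
        (compH _ _ _ (compH _ _ _ e.2 e'.2) (S x y d.1))).
  apply: eq_bigr => q _.
  have E2 := tk2P (rmul p.1 q.1) (kU q.2).
  by rewrite big_allpairs_dep /= in E2; rewrite E2.
rewrite sum_swap2; apply: eq_bigr => e _.
have E3 := tk3P (rcoass p.2) (f := fun m n o =>
   \sum_(d <- delta x y o) F (compA _ _ _ e.1 m) d.2
        (compH _ _ _ (compH _ _ _ e.2 n) (S x y d.1))).
rewrite !big_allpairs_dep /= in E3; rewrite E3; last first.
  split=> [m m' n o|m n n' o|m n o o'|r m n o|r m n o].
  - by rewrite -big_split; apply: eq_bigr => d _; rewrite (compDr HcatA) F1.
  - by rewrite -big_split; apply: eq_bigr => d _; rewrite (compDr HcatH) (compDl HcatH) F3.
  - by rewrite (lin_add (@dlin x y) (kD _ _)).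
  - by apply: eq_bigr => d _; rewrite (compZr HcatA) F12' F23' (compZr HcatH) (compZl HcatH).
  - rewrite (lin_scale (@dlin x y) (kD _ _)); apply: eq_bigr => d _.
    by rewrite SZ (compZr HcatH) (compZr HcatH) (compZl HcatH).
apply: eq_bigr => q _.
have E4 := tk3P (dcoass q.2) (f := fun u v o =>
   F (compA _ _ _ e.1 q.1) o (compH _ _ _ (compH _ _ _ e.2 u) (S x y v))).
rewrite !big_allpairs_dep /= in E4; rewrite -E4; last first.
  split=> [m m' n o|m n n' o|m n o o'|r m n o|r m n o].
  - by rewrite (compDr HcatH) (compDl HcatH) F3.
  - by rewrite SD (compDr HcatH) F3.
  - by rewrite F2.
  - by rewrite SZ !(compZr HcatH) (compZl HcatH).
  - by rewrite SZ (compZr HcatH) F23'.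
transitivity (\sum_(w <- delta x y q.2)
   F (compA _ _ _ e.1 q.1) (eps x y w.1 *: w.2) e.2).
  apply: eq_bigr => w _.
  have F3' : forall m n o o', F m n (o + o') = F m n o + F m n o' by [].
  have Hs := addf_sumr (f := fun n o => F (compA _ _ _ e.1 q.1) n o)
    (delta x y w.1) (fun q' => compH _ _ _ (compH _ _ _ e.2 q'.1) (S x y q'.2))
    w.2 (fun m n n' => F3' _ _ _ _).
  rewrite /= in Hs; rewrite -Hs.
  under eq_bigr => d _ do rewrite (compAss HcatH).
  by rewrite -(comp_sumr HcatH) Sant (compZr HcatH) (comp1r HcatH) -F23'.
have F2' : forall m n n' o, F m (n + n') o = F m n o + F m n' o by [].
have Hs := addf_suml (f := fun n o => F (compA _ _ _ e.1 q.1) n o)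
    (delta x y q.2) (fun w => eps x y w.1 *: w.2) e.2 (fun m m' n => F2' _ _ _ _).
by rewrite /= in Hs; rewrite -Hs dcounit.
Qed.
End Antipode.

End Main.

End Aux.
Import Aux.

Theorem proposition3p7
  (k : comPzRingType) (X : Type)
  (H : X -> X -> lmodType k)
  (compH : forall x y z, H x y -> H y z -> H x z) (oneH : forall x, H x x)
  (delta : forall x y, H x y -> seq (H x y * H x y))
  (eps : forall x y, H x y -> k)
  (A : X -> X -> lmodType k)
  (compA : forall x y z, A x y -> A y z -> A x z) (oneA : forall x, A x x)
  (rho : forall x y, A x y -> seq (A x y * H x y)) :
  is_semiHopf compH oneH delta eps ->
  is_comodule_cat compH oneH delta eps compA oneA rho ->
  is_galois oneH compA rho ->
  (* (a) gamma_xy(h) commutes with B_y *)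
  (forall (x y : X) (h : H x y) (s : seq (A y x * A x y)),
     is_gamma compA oneA rho h s ->
     forall b : A y y, coinv oneH rho b ->
       tB oneH compA rho y x y
          [seq (compA _ _ _ b p.1, p.2) | p <- s]
          [seq (p.1, compA _ _ _ p.2 b) | p <- s]) /\
  (* (b) gamma_xz(h h') = sum l_i(h') l_j(h) (x) r_j(h) r_i(h') *)
  (forall (x y z : X) (h : H x y) (h' : H y z)
          (s : seq (A y x * A x y)) (t : seq (A z y * A y z))
          (w : seq (A z x * A x z)),
     is_gamma compA oneA rho h s ->
     is_gamma compA oneA rho h' t ->
     is_gamma compA oneA rho (compH _ _ _ h h') w ->
     tB oneH compA rho z x z w
        [seq (compA _ _ _ q.1 p.1, compA _ _ _ p.2 q.2) | q <- t, p <- s]) /\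
  (* (c) gamma(h_(1)) (x) h_(2) = l_i(h) (x) r_i(h)_[0] (x) r_i(h)_[1] *)
  (forall (x y : X) (g : H x y -> seq (A y x * A x y)),
     (forall h : H x y, is_gamma compA oneA rho h (g h)) ->
     forall (h : H x y),
       tB3 oneH compA rho y x y (H x y)
          [seq (q.1, q.2, p.2) | p <- delta x y h, q <- g p.1]
          [seq (p.1, q.1, q.2) | p <- g h, q <- rho x y p.2]) /\
  (* (d) sum l_i(h) r_i(h) = eps(h) 1_y *)
  (forall (x y : X) (h : H x y) (s : seq (A y x * A x y)),
     is_gamma compA oneA rho h s ->
     \sum_(p <- s) compA _ _ _ p.1 p.2 = eps x y h *: oneA y) /\
  (* (e) Hopf case: gamma(h_(2)) (x) S(h_(1)) = l_i(h)_[0] (x) r_i(h) (x) l_i(h)_[1] *)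
  (forall S : forall x y, H x y -> H y x,
     is_antipode compH oneH delta eps S ->
     forall (x y : X) (g : H x y -> seq (A y x * A x y)),
     (forall h : H x y, is_gamma compA oneA rho h (g h)) ->
     forall (h : H x y),
       tB3 oneH compA rho y x y (H y x)
          [seq (q.1, q.2, S x y p.1) | p <- delta x y h, q <- g p.2]
          [seq (q.1, p.2, q.2) | p <- g h, q <- rho y x p.1]).

Proof.
move=> HS HC HG; split; [|split; [|split; [|split]]].
- by move=> x y h s Hs b Hb; exact: (part_a HS HC HG Hs Hb).
- by move=> x y z h h' s t w Hs Ht Hw; exact: (part_b HS HC HG Hs Ht Hw).
- by move=> x y g Hg h; exact: (part_c HS HC HG Hg h).
- by move=> x y h s Hs; exact: (part_d HS HC Hs).
- by move=> S HA x y g Hg h; exact: (part_e HS HC HG HA Hg h).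
Qed.
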